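(* Let $(a_n)_{n\ge0}$ be given by $a_n=1$ if $n+1$ is a power of $2$ and $a_n=0$ otherwise. Let $m$ and $K\ge0$ be integers with $1\le 2^K<m\le 2^{K+1}$, and for $n\ge0$ let $d(n,m)=\det\left(a_{i+j+m}\right)_{i,j=0}^{n-1}$ (with $d(0,m)=1$). Then $d(n,m)\in\{1,-1\}$ if $n\equiv 0\pmod{2^{K+1}}$ or $n\equiv -m\pmod{2^{K+1}}$, and $d(n,m)=0$ otherwise. *)

(* Defs.v *)
From mathcomp Require Import all_boot all_algebra.
Set Implicit Arguments. Unset Strict Implicit. Unset Printing Implicit Defensive.
Import GRing.Theory.
Local Open Scope ring_scope.

(* a_n = 1 if n+1 is a power of 2 (2^k, k >= 0), 0 otherwise.  Powers of 2
   that could equal n+1 have exponent k <= n+1, hence k ranges over iota 0 n.+2. *)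
Definition is_pow2 (N : nat) : bool := has (fun k => 2 ^ k == N)%N (iota 0 N.+1).
Definition a_seq (n : nat) : int := if is_pow2 n.+1 then 1 else 0.

Definition hdet (n m : nat) : int := \det (\matrix_(i < n, j < n) a_seq (i + j + m)%N).

(* Main.v *)
Require Import Defs.
From mathcomp Require Import all_boot all_algebra.
From mathcomp Require Import fingroup perm zify.
Import GRing.Theory.

Lemma pow2P N : reflect (exists a, N = 2 ^ a) (is_pow2 N).
Proof.
apply: (iffP hasP) => [[a _ /eqP <-]|[a ->]]; first by exists a.
exists a => //; rewrite mem_iota add0n ltnS.
exact: ltnW (ltn_expl a (ltnSn 1)).
Qed.

Lemma forced m n k i j : i < n -> j < n -> n + m <= 2 ^ k.+1 ->
  2 ^ k < i + m.+1 -> is_pow2 (i + j + m).+1 -> i + j + m.+1 = 2 ^ k.+1.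
Proof.
move=> hi hj hQ hP /pow2P [a ha].
have h1 : k < a by rewrite -(ltn_exp2l _ _ (ltnSn 1)) -ha; lia.
have h2 : a < k.+2.
  rewrite -(ltn_exp2l _ _ (ltnSn 1)) -ha (expnS 2 k.+1); lia.
have ea : a = k.+1 by lia.
rewrite ea in ha; lia.
Qed.

Lemma decomp x : 1 < x -> exists k, 2 ^ k < x <= 2 ^ k.+1.
Proof.
move=> hx; have := trunc_log_bounds (ltnSn 1) (_ : 0 < x.-1).
move=> /(_ ltac:(lia)) /=; set k := trunc_log 2 x.-1 => hk.
exists k; lia.
Qed.

Definition P2 m n (g h : nat -> nat) := forall i, i < n ->
  [/\ g i < n, h i < n, h (g i) = i, g (h i) = i &
      is_pow2 (i + g i + m).+1 /\ is_pow2 (i + h i + m).+1].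

Lemma P2sym {m n g h} : P2 m n g h -> P2 m n h g.
Proof. by move=> H i /H [? ? ? ? []]; split. Qed.

Lemma reduce {m n k g h} : 0 < n -> 2 ^ k < n + m -> n + m <= 2 ^ k.+1 ->
  P2 m n g h ->
  let r := 2 ^ k.+1 - (n + m) in
  [/\ r < n, P2 m r g h &
    forall i, r <= i < n -> g i = 2 ^ k.+1 - m.+1 - i].
Proof.
move=> n0 hP hQ H r; have e2 := expnS 2 k.
have A : forall g h, P2 m n g h -> forall i, i < n -> 2 ^ k < i + m.+1 ->
    i + g i + m.+1 = 2 ^ k.+1.
  move=> g' h' H' i hi hk; have [? _ _ _ [? _]] := H' i hi.
  exact: (@forced m n k i (g' i)).
have B : forall g h, P2 m n g h -> forall i, r <= i < n ->
    i + g i + m.+1 = 2 ^ k.+1.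
  move=> g' h' H' i /andP [ri ni].
  case: (ltnP (2 ^ k) (i + m.+1)) => hk; first exact: A H' i ni hk.
  set j := 2 ^ k.+1 - m.+1 - i.
  have jn : j < n by rewrite /j /r in ri *; lia.
  have hj : 2 ^ k < j + m.+1 by rewrite /j (expnS 2 k); lia.
  have := A _ _ (P2sym H') j jn hj.
  have [_ _ _ E _] := H' j jn.
  move=> E2; have hjj : h' j = i by rewrite /j in E2 *; lia.
  have -> : g' i = j by rewrite -[in LHS]hjj E.
  rewrite /j; lia.
have Bg := B _ _ H; have Bh := B _ _ (P2sym H).
have rn : r < n.
  have [gn _ _ _ _] := H n.-1 ltac:(lia).
  have := A _ _ H n.-1 ltac:(lia) ltac:(lia); rewrite /r; lia.
split => //.
  move=> i ir; have [gn hn hg gh [v1 v2]] := H i ltac:(lia).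
  split => //.
    rewrite ltnNge; apply/negP => rg.
    have := Bh (g i) ltac:(lia); rewrite hg /r in rg *; lia.
  rewrite ltnNge; apply/negP => rg.
  have := Bg (h i) ltac:(lia); rewrite gh /r in rg *; lia.
move=> i hi; have := Bg i hi; lia.
Qed.


Definition CC K m n := (2 ^ K.+1 %| n) || (2 ^ K.+1 %| n + m).

Lemma dvd_sum_eq {d a b} : d %| a + b -> (d %| a) = (d %| b).
Proof.
move=> H; apply/idP/idP => h.
  by rewrite (dvdn_addr _ h) in H.
by rewrite (dvdn_addl _ h) in H.
Qed.

Lemma Cstep {K m n k} : K <= k -> n + m <= 2 ^ k.+1 ->
  CC K m (2 ^ k.+1 - (n + m)) = CC K m n.
Proof.
move=> Kk hQ; set r := _ - _.
have dQ : 2 ^ K.+1 %| 2 ^ k.+1 by apply: dvdn_exp2l.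
have e1 : 2 ^ k.+1 = r + (n + m) by rewrite /r; lia.
have e2 : 2 ^ k.+1 = (r + m) + n by rewrite /r; lia.
rewrite /CC (dvd_sum_eq (_ : 2 ^ K.+1 %| r + (n + m))); last by rewrite -e1.
rewrite (dvd_sum_eq (_ : 2 ^ K.+1 %| (r + m) + n)); last by rewrite -e2.
by rewrite orbC.
Qed.

Lemma rlt {K m n k} : 2 ^ K < m -> m <= 2 ^ K.+1 -> 0 < n -> K <= k ->
  2 ^ k < n + m -> n + m <= 2 ^ k.+1 -> CC K m n -> 2 ^ k.+1 - (n + m) < n.
Proof.
move=> h1 h2 n0 Kk hP hQ; have e2 := expnS 2 k.
set M := 2 ^ K.+1; have M0 : 0 < M by rewrite expn_gt0.
case: (ltngtP K k) Kk => // [Kk|<-] _; last first.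
  case/orP => /dvdnP [a ea].
    have : 1 <= a by move: n0; rewrite ea; case: a {ea}.
    move=> a1; have : M * 1 <= M * a by rewrite leq_mul2l a1 orbT.
    rewrite /M in ea *; lia.
  have : 1 <= a by case: a ea => //=; lia.
  move=> a1; have : M * 1 <= M * a by rewrite leq_mul2l a1 orbT.
  rewrite /M in ea *; lia.
have et : 2 ^ k = M * 2 ^ (k - K.+1) by rewrite -expnD; congr (2 ^ _); lia.
set t := 2 ^ (k - K.+1) in et.
case/orP => /dvdnP [a ea]; rewrite mulnC in ea.
  have : M * t < M * a.+1 by rewrite -et mulnS; lia.
  rewrite ltn_pmul2l // ltnS => ta.
  have : M * t <= M * a by rewrite leq_mul2l ta orbT.
  lia.
have : M * t < M * a by rewrite -et; lia.
rewrite ltn_pmul2l // => ta.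
have : M * t.+1 <= M * a by rewrite leq_mul2l ta orbT.
rewrite mulnS; lia.
Qed.

Lemma kge {K m n k} : 2 ^ K < m -> n + m <= 2 ^ k.+1 -> K <= k.
Proof.
move=> h1 h2; rewrite -ltnS -(ltn_exp2l _ _ (ltnSn 1)); lia.
Qed.

Lemma nonex K m : 2 ^ K < m -> m <= 2 ^ K.+1 ->
  forall n g h, P2 m n g h -> CC K m n.
Proof.
move=> h1 h2 n; elim: n {-2}n (leqnn n) => [|N IH] n hn g h H.
  by move: hn; rewrite leqn0 => /eqP ->; rewrite /CC dvdn0.
case: n hn H => [|n] hn H; first by rewrite /CC dvdn0.
have [k /andP [hP hQ]] := @decomp (n.+1 + m) ltac:(lia).
have [rn Pr _] := reduce (ltn0Sn n) hP hQ H.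
rewrite -(Cstep (kge h1 hQ) hQ).
apply: IH Pr; lia.
Qed.

Lemma exist K m : 2 ^ K < m -> m <= 2 ^ K.+1 ->
  forall n, CC K m n -> exists g, P2 m n g g.
Proof.
move=> h1 h2 n; elim: n {-2}n (leqnn n) => [|N IH] n hn Cn.
  by exists id => i; move: hn; rewrite leqn0 => /eqP ->.
case: n hn Cn => [|n] hn Cn; first by exists id.
have [k /andP [hP hQ]] := @decomp (n.+1 + m) ltac:(lia).
have Kk := kge h1 hQ.
set r := 2 ^ k.+1 - (n.+1 + m).
have rn : r < n.+1 by apply: rlt h1 h2 _ Kk hP hQ Cn.
have [g Hg] : exists g, P2 m r g g.
  apply: IH; first lia.
  by rewrite /r (Cstep Kk hQ).
exists (fun i => if i < r then g i else 2 ^ k.+1 - m.+1 - i) => i hi.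
case: ifP => ir.
  have [gr _ gg _ [v _]] := Hg i ir.
  by rewrite gr gg; split => //; lia.
have ge : r <= 2 ^ k.+1 - m.+1 - i by rewrite /r; lia.
rewrite [X in if X then _ else _]ltnNge ge /=.
have e : 2 ^ k.+1 - m.+1 - (2 ^ k.+1 - m.+1 - i) = i by rewrite /r in ir; lia.
have v : is_pow2 (i + (2 ^ k.+1 - m.+1 - i) + m).+1.
  apply/pow2P; exists k.+1; rewrite /r in ir; lia.
rewrite e; split => //; rewrite /r in ir *; lia.
Qed.

Lemma uniq_sol m : 0 < m -> forall n g h g2 h2, P2 m n g h -> P2 m n g2 h2 ->
  forall i, i < n -> g i = g2 i.
Proof.
move=> m0 n; elim: n {-2}n (leqnn n) => [|N IH] n hn g h g2 h2 H H2 i.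
  by move: hn; rewrite leqn0 => /eqP ->.
case: n hn H H2 => [|n] hn H H2 //.
have [k /andP [hP hQ]] := @decomp (n.+1 + m) ltac:(lia).
have [rn Pr E] := reduce (ltn0Sn n) hP hQ H.
have [_ Pr2 E2] := reduce (ltn0Sn n) hP hQ H2.
move=> hi; case: (ltnP i (2 ^ k.+1 - (n.+1 + m))) => ir.
  apply: (IH _ _ _ _ _ _ Pr Pr2 i ir); lia.
by rewrite E ?E2 ?ir.
Qed.

Set Implicit Arguments. Unset Strict Implicit.

Definition valid m n (s : 'S_n) := [forall i : 'I_n, is_pow2 (i + s i + m).+1].

Definition gof n (s : 'S_n) (i : nat) : nat :=
  oapp (fun x : 'I_n => val (s x)) 0%N (insub i).

Lemma gofE n (s : 'S_n) (x : 'I_n) : gof s x = s x.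
Proof. by rewrite /gof valK. Qed.

Lemma P2_of m n (s : 'S_n) : valid m s -> P2 m n (gof s) (gof (s^-1)%g).
Proof.
move=> /forallP v i hi; set x := Ordinal hi.
have -> : i = x by [].
rewrite !gofE permK permKV; split => //.
split; first exact: v.
rewrite [x + _]addnC; have := v ((s^-1)%g x); by rewrite permKV.
Qed.

Lemma uniq_valid m n (s t : 'S_n) : 0 < m -> valid m s -> valid m t -> s = t.
Proof.
move=> m0 vs vt; apply/permP => x; apply: val_inj.
have := @uniq_sol m m0 _ _ _ _ _ (P2_of vs) (P2_of vt) x (ltn_ord x).
by rewrite !gofE.
Qed.

Lemma valid_of m n g : P2 m n g g -> exists s : 'S_n, valid m s.
Proof.
move=> H.
pose f (x : 'I_n) : 'I_n := insubd x (g x).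
have fE x : val (f x) = g x.
  by rewrite val_insubd; have [-> _ _ _ _] := H x (ltn_ord x).
have finj : injective f.
  move=> x y e; apply: val_inj.
  have [_ _ ex _ _] := H x (ltn_ord x); have [_ _ ey _ _] := H y (ltn_ord y).
  change (nat_of_ord x = nat_of_ord y); by rewrite -ex -ey -!fE e.
exists (perm finj); apply/forallP => x; rewrite permE fE.
by have [_ _ _ _ []] := H x (ltn_ord x).
Qed.

Local Open Scope ring_scope.
Lemma det_eq n m : hdet n m = (\sum_(s : 'S_n | valid m s) (-1) ^+ s :> int)%R.
Proof.
rewrite /hdet /determinant (bigID (fun s => valid m s)) /=.
rewrite [X in _ + X]big1 ?addr0; last first.
  move=> s /forallPn [i hi].
  by rewrite (bigD1 i) //= mxE /a_seq (negbTE hi) mul0r mulr0.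
apply: eq_bigr => s /forallP v.
rewrite big1 ?mulr1 // => i _.
by rewrite mxE /a_seq v.
Qed.

Theorem theorem3p1 (m K : nat) :
  (1 <= 2 ^ K < m)%N -> (m <= 2 ^ K.+1)%N ->
  forall n : nat,
    (((n %% 2 ^ K.+1 == 0)%N || ((n + m) %% 2 ^ K.+1 == 0)%N) ->
       hdet n m = 1 \/ hdet n m = -1) /\
    (~~ ((n %% 2 ^ K.+1 == 0)%N || ((n + m) %% 2 ^ K.+1 == 0)%N) ->
       hdet n m = 0).
Proof.
move=> /andP [_ h1] h2 n.
have m0 : (0 < m)%N by lia.
change ((n %% 2 ^ K.+1 == 0)%N || ((n + m) %% 2 ^ K.+1 == 0)%N) with (CC K m n).
split => [Cn | nCn].
  have [g Hg] := @exist K m h1 h2 n Cn.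
  have [s vs] := valid_of Hg.
  rewrite det_eq (bigD1 s) //= big1 ?addr0; last first.
    by move=> t /andP [vt ne]; rewrite (uniq_valid m0 vt vs) eqxx in ne.
  by case: (odd_perm s); [right|left].
rewrite det_eq big1 // => s vs.
by move: nCn; rewrite (@nonex K m h1 h2 _ _ _ (P2_of vs)).
Qed.
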